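(* Let $\psi_{12}$ be the endomorphism of $\mathcal O_2$ defined by $\psi_{12}(s_1)=s_1s_2s_1^*+s_1s_1s_2^*$ and $\psi_{12}(s_2)=s_2$. For $J=(j_1,\dots,j_k)\in\{1,2\}^k$ ($k\ge1$) let $n_1(J)=\sum_{l=1}^k(2-j_l)$ (the number of entries equal to $1$). Then: if $n_1(J)$ is even, there are words $J_1,J_2$ over $\{1,2\}$ with $P(J)\circ\psi_{12}\cong P(J_1)\oplus P(J_2)$; if $n_1(J)$ is odd, there is a word $J_3$ over $\{1,2\}$ with $P(J)\circ\psi_{12}\cong P(J_3)$. Here $\cong$ is unitary equivalence.
   Context: $\mathcal O_2$ is the Cuntz algebra generated by $s_1,s_2$ with $s_i^*s_j=\delta_{ij}I$ and $s_1s_1^*+s_2s_2^*=I$; $s_J=s_{j_1}\cdots s_{j_k}$. A representation $(\mathcal H,\pi)$ of $\mathcal O_2$ is $P(J)$ if there is a unit cyclic vector $\Omega$ with $\pi(s_J)\Omega=\Omega$ and $\{\pi(s_{j_i}\cdots s_{j_k})\Omega\}_{i=1}^k$ orthonormal; such a representation is unique up to unitary equivalence and is denoted $P(J)$. $P(J)\circ\psi_{12}$ denotes the representation $\pi\circ\psi_{12}$. ($\psi_{12}=\psi_\sigma$ for the transposition $\sigma$ of $\{1,2\}^2$ exchanging $(1,1)$ and $(1,2)$.) *)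

(* Defs.v *)
From mathcomp Require Import all_boot all_algebra.
From mathcomp Require Import complex.
From mathcomp Require Import reals.
Set Implicit Arguments. Unset Strict Implicit. Unset Printing Implicit Defensive.
Import GRing.Theory Num.Theory.
Local Open Scope ring_scope.

Record hilbert (R : realType) := Hilbert {
  hcar :> lmodType R[i];
  hip : hcar -> hcar -> R[i];
  hip_linl : forall (a : R[i]) (x y z : hcar),
      hip (a *: x + y) z = a * hip x z + hip y z;
  hip_sym : forall x y : hcar, hip y x = (hip x y)^*%C;
  hip_ge0 : forall x : hcar, 0 <= hip x x;
  hip_def : forall x : hcar, hip x x = 0 -> x = 0;
  hip_complete : forall u : nat -> hcar,
      (forall e : R[i], 0 < e -> exists N : nat, forall m n : nat,
          (N <= m)%N -> (N <= n)%N -> sqrtC (hip (u m - u n) (u m - u n)) < e) ->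
      exists l : hcar, forall e : R[i], 0 < e -> exists N : nat, forall n : nat,
          (N <= n)%N -> sqrtC (hip (u n - l) (u n - l)) < e
}.

Section Cuntz.
Variable R : realType.

Definition hnorm (H : hilbert R) (x : H) : R[i] := sqrtC (hip x x).

(* Generators are indexed by 'I_2 : the index i stands for s_(i+1),
   i.e. ord0 <-> s_1 and 1 <-> s_2. *)
Definition lab (j : 'I_2) : nat := (nat_of_ord j).+1.

Definition n1 (J : seq 'I_2) : nat := \sum_(j <- J) (2 - lab j).

Definition is_rep (H : hilbert R) (S T : 'I_2 -> H -> H) : Prop :=
  [/\ (forall i x y, hip (S i x) y = hip x (T i y)),
      (forall i j x, T i (S j x) = if i == j then x else 0) &
      (forall x, S ord0 (T ord0 x) + S 1 (T 1 x) = x)].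

Definition act_word (H : hilbert R) (S : 'I_2 -> H -> H) (J : seq 'I_2) (x : H) : H :=
  foldr (fun j v => S j v) x J.

(* *-words: letters (i, false) = s_i, (i, true) = s_i^* ; they span a dense
   *-subalgebra of O_2. *)
Definition act_sword (H : hilbert R) (S T : 'I_2 -> H -> H)
    (w : seq ('I_2 * bool)) (x : H) : H :=
  foldr (fun l v => if l.2 then T l.1 v else S l.1 v) x w.

Definition cyclic_vec (H : hilbert R) (S T : 'I_2 -> H -> H) (Om : H) : Prop :=
  forall (x : H) (e : R[i]), 0 < e ->
    exists l : seq (R[i] * seq ('I_2 * bool)),
      hnorm (x - \sum_(p <- l) p.1 *: act_sword S T p.2 Om) < e.

Definition isP (J : seq 'I_2) (H : hilbert R) (S T : 'I_2 -> H -> H) : Prop :=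
  is_rep S T /\
  exists Om : H,
    [/\ hip Om Om = 1, cyclic_vec S T Om, act_word S J Om = Om &
        forall m n : nat, (m < size J)%N -> (n < size J)%N ->
          hip (act_word S (drop m J) Om) (act_word S (drop n J) Om)
            = (m == n)%:R].

(* pi o psi_12 : s_1 |-> S1 S2 T1 + S1 S1 T2, s_2 |-> S2, with adjoints. *)
Definition psi12S (H : hilbert R) (S T : 'I_2 -> H -> H) (i : 'I_2) (x : H) : H :=
  if i == ord0 then S ord0 (S 1 (T ord0 x)) + S ord0 (S ord0 (T 1 x)) else S 1 x.
Definition psi12T (H : hilbert R) (S T : 'I_2 -> H -> H) (i : 'I_2) (x : H) : H :=
  if i == ord0 then S ord0 (T 1 (T ord0 x)) + S 1 (T ord0 (T ord0 x)) else T 1 x.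

Definition unit_equiv (H H' : hilbert R) (S : 'I_2 -> H -> H) (S' : 'I_2 -> H' -> H') : Prop :=
  exists U : H' -> H,
    [/\ (forall (a : R[i]) x y, U (a *: x + y) = a *: U x + U y),
        (forall x y, hip (U x) (U y) = hip x y),
        (forall z, exists x, U x = z) &
        (forall i x, U (S' i x) = S i (U x))].

(* Unitary equivalence of (H, S) with the direct sum (H1,S1) (+) (H2,S2):
   a unitary U : H1 (+) H2 -> H, U (x, y) = V1 x + V2 y, intertwining. *)
Definition unit_equiv_sum (H H1 H2 : hilbert R) (S : 'I_2 -> H -> H)
    (S1 : 'I_2 -> H1 -> H1) (S2 : 'I_2 -> H2 -> H2) : Prop :=
  exists (V1 : H1 -> H) (V2 : H2 -> H),
    [/\ (forall (a : R[i]) x y, V1 (a *: x + y) = a *: V1 x + V1 y),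
        (forall (a : R[i]) x y, V2 (a *: x + y) = a *: V2 x + V2 y),
        (forall x y, hip (V1 x) (V1 y) = hip x y),
        (forall x y, hip (V2 x) (V2 y) = hip x y) &
        (forall x y, hip (V1 x) (V2 y) = 0)] /\
    [/\ (forall z, exists x y, V1 x + V2 y = z),
        (forall i x, V1 (S1 i x) = S i (V1 x)) &
        (forall i y, V2 (S2 i y) = S i (V2 y))].

End Cuntz.

(* Main.v *)
From HB Require Import structures.
Require Import Defs.
From mathcomp Require Import all_boot all_order all_algebra.
From mathcomp Require Import complex.
From mathcomp Require Import reals.
From mathcomp Require Import zify ring lra.
From Stdlib Require ClassicalEpsilon.
Set Implicit Arguments. Unset Strict Implicit. Unset Printing Implicit Defensive.
Import Order.TTheory GRing.Theory Num.Theory.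
Local Open Scope ring_scope.

Section HipLemmas.
Variable R : realType.
Variable H : hilbert R.
Implicit Types x y z : H.

Lemma hip0l z : hip (0 : H) z = 0.
Proof.
have := hip_linl 1 (0:H) 0 z; rewrite scale1r addr0 mul1r.
by move=> /(congr1 (fun t => t - hip (0:H) z)); rewrite subrr addrK.
Qed.

Lemma hipDl x y z : hip (x + y) z = hip x z + hip y z.
Proof. by have := hip_linl 1 x y z; rewrite scale1r mul1r. Qed.

Lemma hipZl a x z : hip (a *: x) z = a * hip x z.
Proof. by have := hip_linl a x 0 z; rewrite addr0 hip0l addr0. Qed.

Lemma hipNl x z : hip (- x) z = - hip x z.
Proof. by rewrite -scaleN1r hipZl mulN1r. Qed.

Lemma hipBl x y z : hip (x - y) z = hip x z - hip y z.
Proof. by rewrite hipDl hipNl. Qed.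

Lemma hipDr x y z : hip x (y + z) = hip x y + hip x z.
Proof. by rewrite hip_sym hipDl rmorphD /= -!hip_sym. Qed.

Lemma hipZr a x y : hip x (a *: y) = (a^*)%C * hip x y.
Proof. by rewrite hip_sym hipZl rmorphM /= -hip_sym. Qed.

Lemma hip0r x : hip x (0 : H) = 0.
Proof. by rewrite hip_sym hip0l conjc0. Qed.

Lemma hipNr x y : hip x (- y) = - hip x y.
Proof. by rewrite hip_sym hipNl rmorphN /= -hip_sym. Qed.

Lemma hipBr x y z : hip x (y - z) = hip x y - hip x z.
Proof. by rewrite hipDr hipNr. Qed.

Lemma hip_suml (I : Type) (l : seq I) (F : I -> H) z :
  hip (\sum_(p <- l) F p) z = \sum_(p <- l) hip (F p) z.
Proof.
elim: l => [|p l IH]; first by rewrite !big_nil hip0l.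
by rewrite !big_cons hipDl IH.
Qed.

Lemma hip_sumr (I : Type) (l : seq I) (F : I -> H) z :
  hip z (\sum_(p <- l) F p) = \sum_(p <- l) hip z (F p).
Proof.
elim: l => [|p l IH]; first by rewrite !big_nil hip0r.
by rewrite !big_cons hipDr IH.
Qed.

Lemma hip_ext x y : (forall z, hip x z = hip y z) -> x = y.
Proof.
move=> E; apply/eqP; rewrite -subr_eq0; apply/eqP/hip_def.
by rewrite hipBl E subrr.
Qed.

Lemma hip_conj0 x y : hip x y = 0 -> hip y x = 0.
Proof. by move=> E; rewrite hip_sym E conjc0. Qed.

End HipLemmas.

Section Ops.
Variable R : realType.
Variable H : hilbert R.
Variables (S T : 'I_2 -> H -> H).
Hypothesis rep : is_rep S T.

Lemma adjS i x y : hip (S i x) y = hip x (T i y).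
Proof. by case: rep. Qed.

Lemma adjT i x y : hip (T i x) y = hip x (S i y).
Proof. by rewrite hip_sym -adjS -hip_sym. Qed.

Lemma TS i j x : T i (S j x) = if i == j then x else 0.
Proof. by case: rep. Qed.

Lemma SScover x : S ord0 (T ord0 x) + S 1 (T 1 x) = x.
Proof. by case: rep. Qed.

Lemma Slin i a x y : S i (a *: x + y) = a *: S i x + S i y.
Proof.
apply: hip_ext => z.
by rewrite adjS hip_linl -!adjS -hip_linl.
Qed.

Lemma Tlin i a x y : T i (a *: x + y) = a *: T i x + T i y.
Proof.
apply: hip_ext => z.
rewrite adjT hip_linl -!adjT -hip_linl; reflexivity.
Qed.

Lemma S0 i : S i 0 = 0.
Proof. by have := Slin i (-1) 0 0; rewrite scaler0 addr0 scaleN1r addNr. Qed.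
Lemma T0 i : T i 0 = 0.
Proof. by have := Tlin i (-1) 0 0; rewrite scaler0 addr0 scaleN1r addNr. Qed.
Lemma SD i x y : S i (x + y) = S i x + S i y.
Proof. by have := Slin i 1 x y; rewrite !scale1r. Qed.
Lemma TD i x y : T i (x + y) = T i x + T i y.
Proof. by have := Tlin i 1 x y; rewrite !scale1r. Qed.
Lemma SZ i a x : S i (a *: x) = a *: S i x.
Proof. by have := Slin i a x 0; rewrite !addr0 S0 addr0. Qed.
Lemma TZ i a x : T i (a *: x) = a *: T i x.
Proof. by have := Tlin i a x 0; rewrite !addr0 T0 addr0. Qed.

End Ops.

Notation Top_adjS := adjS (only parsing).
Notation Top_adjT := adjT (only parsing).

Section Reals.
Variable R : realType.

Lemma ge0_real (x : R[i]) : 0 <= x -> x = (complex.Re x)%:C%C.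
Proof.
move=> Hx; rewrite [LHS]complexE (ger0_Im Hx) /=.
by rewrite rmorph0 mulr0 addr0.
Qed.

Lemma Re_ge0 (x : R[i]) : 0 <= x -> 0 <= complex.Re x.
Proof. by move=> Hx; by rewrite -(@lecR R) rmorph0 -ge0_real. Qed.

Lemma ltc0R (r : R) : (0 < r%:C%C :> R[i]) = (0 < r).
Proof. by rewrite -(@ltcR R) rmorph0. Qed.

Lemma pos_real (e : R[i]) : 0 < e -> exists r : R, 0 < r /\ e = r%:C%C.
Proof.
move=> He; have E := ge0_real (ltW He); exists (complex.Re e); split => //.
by rewrite -(@ltcR R) rmorph0 -E.
Qed.

Lemma eps_nat (r : R) : 0 < r -> exists N : nat, (N.+1%:R)^-1 < r.
Proof.
move=> Hr; have Hi : 0 <= r^-1 by rewrite invr_ge0 ltW.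
have H1 := archi_boundP Hi.
set N := Num.bound r^-1 in H1; exists N.
have H2 : r^-1 < N.+1%:R by apply: (lt_le_trans H1); rewrite ler_nat.
by rewrite -[X in _ < X](invrK r) ltf_pV2 ?posrE ?invr_gt0 ?ltr0Sn.
Qed.

Lemma eps_mono (N n : nat) : (N <= n)%N -> (n.+1%:R)^-1 <= (N.+1%:R)^-1 :> R.
Proof.
by move=> Hn; rewrite lef_pV2 ?posrE ?ltr0Sn // ler_nat ltnS.
Qed.

Lemma eps_pos (n : nat) : 0 < (n.+1%:R)^-1 :> R.
Proof. by rewrite invr_gt0 ltr0Sn. Qed.

Lemma arith1 (X A B em en : R) : X <= 2 * (A + B) -> A < en -> B < em -> X < 2 * (em + en).
Proof. lra. Qed.

Lemma arith2 (X em en eN r : R) : X < 2 * (em + en) -> em <= eN -> en <= eN ->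
  eN < r / 4%:R -> X < r.
Proof. lra. Qed.

Lemma arith3 (X P Y Q1 Q2 en eN eps : R) : X <= 2 * (P + Y) -> Y <= 2 * (Q1 + Q2) ->
  P < en -> en <= eN -> eN < eps / 10%:R -> Q1 < eps / 10%:R -> Q2 < eps / 10%:R -> X < eps.
Proof. lra. Qed.

Lemma arith4 (X Y Z : R) : X + Y < Z -> 0 <= X -> 0 <= Y -> X < Z /\ Y < Z.
Proof. move=> *; split; lra. Qed.

Lemma vanish (a b : R) : 0 <= a -> 0 <= b -> (forall eps, 0 < eps -> a <= eps * b) -> a = 0.
Proof.
move=> Ha Hb H; apply/eqP; rewrite eq_le Ha andbT; apply/negPn/negP; rewrite -ltNge => Ha'.
have Hp : 0 < a / (b + 1) by apply: divr_gt0 => //; lra.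
have H' := H _ Hp.
have E : a / (b+1) * b = a - a / (b+1) by field; lra.
lra.
Qed.

Lemma vanish' (a : R) : 0 <= a -> (forall eps, 0 < eps -> a < eps) -> a = 0.
Proof.
move=> Ha H; apply: (@vanish a 1 Ha ler01) => eps Heps; rewrite mulr1; exact: ltW (H _ Heps).
Qed.

End Reals.

Section HAn.
Variable R : realType.
Variable H : hilbert R.
Implicit Types x y z : H.

Definition rn x : R := complex.Re (hip x x).

Lemma nrm2E x : hip x x = (rn x)%:C%C.
Proof. exact: ge0_real (hip_ge0 x). Qed.

Lemma rn_ge0 x : 0 <= rn x.
Proof. exact: Re_ge0 (hip_ge0 x). Qed.

Lemma rn_opp x : rn (- x) = rn x.
Proof. by rewrite /rn hipNl hipNr opprK. Qed.

Lemma rn_eq0 x : rn x = 0 -> x = 0.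
Proof. by move=> E; apply: hip_def; rewrite nrm2E E rmorph0. Qed.

Lemma hnorm_lt x (r : R) : 0 < r -> (sqrtC (hip x x) < r%:C%C) = (rn x < r ^+ 2).
Proof.
move=> Hr.
have Er : r%:C%C = sqrtC ((r ^+ 2)%:C%C) :> R[i].
  by rewrite rmorphXn /= sqrCK // ler0c ltW.
rewrite Er nrm2E ltr_sqrtC ?nnegrE ?ler0c ?rn_ge0 ?exprn_ge0 ?ltW //.
by rewrite ltcR.
Qed.

Lemma rn_add_le x y : rn (x + y) <= 2 * (rn x + rn y).
Proof.
have E : hip (x + y) (x + y) + hip (x - y) (x - y) = 2%:R * (hip x x + hip y y).
  rewrite !hipDl !hipDr !hipNl !hipNr; ring.
rewrite !nrm2E -!rmorphD /= -(rmorph_nat (real_complex R) 2) -rmorphM /= in E.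
have := complexI E; have := rn_ge0 (x - y); lra.
Qed.

Lemma rn_pyth x y : hip x y = 0 -> rn (x + y) = rn x + rn y.
Proof.
move=> Hxy; have Hyx := hip_conj0 Hxy.
have E : hip (x + y) (x + y) = hip x x + hip y y.
  by rewrite hipDl !hipDr Hxy Hyx addr0 add0r.
rewrite !nrm2E -rmorphD in E; exact: complexI E.
Qed.

Lemma CS x y : complex.Re (hip x y * (hip x y)^*%C) <= rn x * rn y.
Proof.
have Hq := Re_ge0 (mulcJ_ge0 (hip x y)).
have Eq := ge0_real (mulcJ_ge0 (hip x y)).
set q := complex.Re _ in Hq Eq *.
case: (eqVneq (rn y) 0) => [Ey|Ny].
  have y0 := rn_eq0 Ey; move: Eq; rewrite y0 hip0r mul0r => /esym.
  rewrite -(rmorph0 (real_complex R)) => /complexI ->.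
  by rewrite mulr_ge0 ?rn_ge0.
have Hy : 0 < rn y by rewrite lt_def Ny rn_ge0.
set c := hip x y in Eq.
have Ey := nrm2E y; set b := rn y in Ey Hy Ny *.
have Hbc : (hip y y)^*%C = hip y y by rewrite -hip_sym.
have Hz := hip_ge0 ((hip y y) *: x - c *: y).
have E : hip ((hip y y) *: x - c *: y) ((hip y y) *: x - c *: y) =
         hip y y * (hip y y * hip x x - c * c^*%C).
  rewrite !hipDl !hipDr !hipNl !hipNr !hipZl !hipZr Hbc -/c (hip_sym x y) -/c.
  ring.
rewrite E Ey nrm2E Eq -!rmorphM -rmorphB -rmorphM /= ler0c pmulr_rge0 // subr_ge0 in Hz.
by rewrite mulrC.
Qed.

Lemma zero_of_q (c : R[i]) : complex.Re (c * c^*%C) = 0 -> c = 0.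
Proof.
move=> Hq; have Eq := ge0_real (mulcJ_ge0 c).
rewrite Hq rmorph0 in Eq; move/eqP: Eq; rewrite mulf_eq0 conjc_eq0.
by case/orP => /eqP.
Qed.

Section Decomp.
Variables (G : bool -> H -> Prop) (Sp : bool -> H -> Prop).
Definition Pc c x := forall v, G (~~ c) v -> hip x v = 0.
Hypotheses
  (hSG : forall c a v, Sp c a -> G (~~ c) v -> hip a v = 0)
  (hSS : forall c a b, Sp c a -> Sp (~~ c) b -> hip a b = 0)
  (hPS : forall c x b, Pc c x -> Sp (~~ c) b -> hip x b = 0)
  (hSub : forall c x y, Sp c x -> Sp c y -> Sp c (x - y))
  (hDense : forall z (r : R), 0 < r ->
      exists a b, [/\ Sp false a, Sp true b & rn (z - (a + b)) < r]).

Lemma approx c x (r : R) : Pc c x -> 0 < r -> exists a, Sp c a /\ rn (x - a) < r.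
Proof.
move=> Hx Hr; have [a [b [Ha Hb Hab]]] := hDense x Hr.
case: c Hx => Hx.
- exists b; split => //.
  have E : x - (a + b) = (x - b) + - a by rewrite opprD addrA addrAC.
  have Ho : hip (x - b) (- a) = 0.
    by rewrite hipNr hipBl (hPS Hx Ha) (hSS Hb Ha) subrr oppr0.
  rewrite E rn_pyth // rn_opp in Hab; have := rn_ge0 a; lra.
- exists a; split => //.
  have E : x - (a + b) = (x - a) + - b by rewrite opprD addrA.
  have Ho : hip (x - a) (- b) = 0.
    by rewrite hipNr hipBl (hPS Hx Hb) (hSS Ha Hb) subrr oppr0.
  rewrite E rn_pyth // rn_opp in Hab; have := rn_ge0 b; lra.
Qed.

Lemma limit_closed c (u : nat -> H) l : (forall n, Pc c (u n)) ->
  (forall e : R[i], 0 < e -> exists N, forall n, (N <= n)%N ->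
      sqrtC (hip (u n - l) (u n - l)) < e) -> Pc c l.
Proof.
move=> Hu Hl v Hv; apply: zero_of_q.
apply: (vanish (Re_ge0 (mulcJ_ge0 _)) (rn_ge0 v)) => eps Heps.
have Hs : 0 < Num.sqrt eps by rewrite sqrtr_gt0.
have [N HN] := Hl (Num.sqrt eps)%:C%C (etrans (ltc0R _) Hs).
have := HN N (leqnn N); rewrite hnorm_lt // (sqr_sqrtr (ltW Heps)) => Hn.
have -> : hip l v = hip (l - u N) v by rewrite hipBl (Hu N v Hv) subr0.
apply: (le_trans (CS _ _)); apply: ler_wpM2r; first exact: rn_ge0.
by rewrite -rn_opp opprB ltW.
Qed.

Lemma orth01 x y : Pc false x -> Pc true y -> hip x y = 0.
Proof.
move=> Hx Hy; apply: zero_of_q.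
apply: (vanish (Re_ge0 (mulcJ_ge0 _)) (rn_ge0 x)) => eps Heps.
have [b [Hb Hyb]] := approx Hy Heps.
have -> : hip x y = hip x (y - b) by rewrite hipBr (hPS Hx Hb) subr0.
apply: (le_trans (CS _ _)); rewrite mulrC; apply: ler_wpM2r; first exact: rn_ge0.
exact: ltW.
Qed.

Lemma decomp z : exists x y, [/\ Pc false x, Pc true y & x + y = z].
Proof.
have Hex : forall n : nat, exists p : H * H,
    [/\ Sp false p.1, Sp true p.2 & rn (z - (p.1 + p.2)) < (n.+1%:R)^-1].
  move=> n; have [a [b [Ha Hb Hab]]] := hDense z (eps_pos R n); by exists (a, b).
pose f n := proj1_sig (ClassicalEpsilon.constructive_indefinite_description _ (Hex n)).
have Hf : forall n, [/\ Sp false (f n).1, Sp true (f n).2 &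
                      rn (z - ((f n).1 + (f n).2)) < (n.+1%:R)^-1].
  move=> n; exact: (proj2_sig (ClassicalEpsilon.constructive_indefinite_description _ (Hex n))).
pose a n := (f n).1; pose b n := (f n).2.
have {}Hf : forall n, [/\ Sp false (a n), Sp true (b n) &
                      rn (z - (a n + b n)) < (n.+1%:R)^-1] := Hf.
have Hbnd : forall m n, rn (a m - a n) + rn (b m - b n) <
                        2 * ((m.+1%:R)^-1 + (n.+1%:R)^-1).
  move=> m n; have [Ham Hbm Hm] := Hf m; have [Han Hbn Hn] := Hf n.
  have Ho : hip (a m - a n) (b m - b n) = 0.
    by apply: (hSS (c := false)); apply: hSub.
  rewrite -rn_pyth //.
  have -> : (a m - a n) + (b m - b n) = (z - (a n + b n)) + - (z - (a m + b m)).
    by rewrite opprB [RHS]addrC [RHS]addrA subrK addrACA opprD.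
  have := rn_add_le (z - (a n + b n)) (- (z - (a m + b m))).
  rewrite rn_opp => Hle; exact: (arith1 Hle Hn Hm).
have Cauchy : forall u : nat -> H, (forall m n, rn (u m - u n) < 2 * ((m.+1%:R)^-1 + (n.+1%:R)^-1)) ->
   forall e : R[i], 0 < e -> exists N, forall m n, (N <= m)%N -> (N <= n)%N ->
     sqrtC (hip (u m - u n) (u m - u n)) < e.
  move=> u Hu e He; have [r [Hr ->]] := pos_real He.
  have Hr2 : 0 < r ^+ 2 / 4%:R by apply: divr_gt0 => //; apply: exprn_gt0.
  have [N HN] := eps_nat Hr2; exists N => m n Hm Hn.
  rewrite hnorm_lt //; exact: (arith2 (Hu m n) (eps_mono R Hm) (eps_mono R Hn) HN).
have [x Hx] := hip_complete (Cauchy a (fun m n => proj1 (arith4 (Hbnd m n) (rn_ge0 _) (rn_ge0 _)))).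
have [y Hy] := hip_complete (Cauchy b (fun m n => proj2 (arith4 (Hbnd m n) (rn_ge0 _) (rn_ge0 _)))).
have Px : Pc false x.
  apply: (limit_closed (u := a)) Hx => n v Hv; by case: (Hf n) => Ha _ _; apply: hSG Ha Hv.
have Py : Pc true y.
  apply: (limit_closed (u := b)) Hy => n v Hv; by case: (Hf n) => _ Hb _; apply: hSG Hb Hv.
exists x, y; split => //.
apply/eqP; rewrite eq_sym -subr_eq0; apply/eqP; apply: rn_eq0.
apply: (vanish' (rn_ge0 _)) => eps Heps.
have Hd : 0 < eps / 10%:R by apply: divr_gt0.
have Hsd : 0 < Num.sqrt (eps / 10%:R) by rewrite sqrtr_gt0.
have [N1 HN1] := eps_nat Hd.
have [N2 HN2] := Hx _ (etrans (ltc0R _) Hsd).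
have [N3 HN3] := Hy _ (etrans (ltc0R _) Hsd).
set n := (N1 + N2 + N3)%N.
have H2 := HN2 n (leq_trans (leq_addl N1 N2) (leq_addr N3 _)).
have H3 := HN3 n (leq_addl _ N3).
rewrite hnorm_lt // (sqr_sqrtr (ltW Hd)) in H2.
rewrite hnorm_lt // (sqr_sqrtr (ltW Hd)) in H3.
have H1 := eps_mono R (leq_trans (leq_addr N2 N1) (leq_addr N3 _) : (N1 <= n)%N).
have [_ _ Hn] := Hf n.
have -> : z - (x + y) = (z - (a n + b n)) + ((a n - x) + (b n - y)).
  have E2 : (a n - x) + (b n - y) = (a n + b n) - (x + y) by rewrite addrACA opprD.
  by rewrite E2 addrA subrK.
exact: (arith3 (rn_add_le (z - (a n + b n)) ((a n - x) + (b n - y)))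
  (rn_add_le (a n - x) (b n - y)) Hn H1 HN1 H2 H3).
Qed.

End Decomp.
End HAn.

Section Sub.
Variable R : realType.
Variable H : hilbert R.
Variable P : H -> Prop.
Hypotheses (P0 : P 0) (PL : forall a x y, P x -> P y -> P (a *: x + y))
  (Pcl : forall (u : nat -> H) l, (forall n, P (u n)) ->
     (forall e : R[i], 0 < e -> exists N, forall n, (N <= n)%N ->
        sqrtC (hip (u n - l) (u n - l)) < e) -> P l).

Definition pb (x : H) : bool :=
  if ClassicalEpsilon.excluded_middle_informative (P x) then true else false.

Lemma pbP x : reflect (P x) (pb x).
Proof. by rewrite /pb; case: ClassicalEpsilon.excluded_middle_informative => h; constructor. Qed.

Definition KT := {x : H | pb x}.
HB.instance Definition _ := Choice.copy KT {x : H | pb x}.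

Lemma PD x y : P x -> P y -> P (x + y).
Proof. by move=> hx hy; have := PL 1 hx hy; rewrite scale1r. Qed.
Lemma PN x : P x -> P (- x).
Proof. by move=> hx; have := PL (-1) hx P0; rewrite addr0 scaleN1r. Qed.
Lemma PZ a x : P x -> P (a *: x).
Proof. by move=> hx; have := PL a hx P0; rewrite addr0. Qed.

Definition kmk (x : H) (h : P x) : KT := exist _ x (introT (pbP x) h).
Lemma kP (x : KT) : P (val x).
Proof. exact: (elimT (pbP _) (valP x)). Qed.

Definition kzero : KT := kmk P0.
Definition kadd (x y : KT) : KT := kmk (PD (kP x) (kP y)).
Definition kopp (x : KT) : KT := kmk (PN (kP x)).
Definition kscale (a : R[i]) (x : KT) : KT := kmk (PZ a (kP x)).

Lemma kaddA : associative kadd.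
Proof. by move=> x y z; apply: val_inj; rewrite /= addrA. Qed.
Lemma kaddC : commutative kadd.
Proof. by move=> x y; apply: val_inj; rewrite /= addrC. Qed.
Lemma kadd0 : left_id kzero kadd.
Proof. by move=> x; apply: val_inj; rewrite /= add0r. Qed.
Lemma kaddN : left_inverse kzero kopp kadd.
Proof. by move=> x; apply: val_inj; rewrite /= addNr. Qed.

HB.instance Definition _ := GRing.isZmodule.Build KT kaddA kaddC kadd0 kaddN.

Lemma kscaleA a b v : kscale a (kscale b v) = kscale (a * b) v.
Proof. by apply: val_inj; rewrite /= scalerA. Qed.
Lemma kscale1 : left_id 1 kscale.
Proof. by move=> v; apply: val_inj; rewrite /= scale1r. Qed.
Lemma kscaleDr : right_distributive kscale +%R.
Proof. by move=> a x y; apply: val_inj; rewrite /= scalerDr. Qed.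
Lemma kscaleDl v : {morph kscale^~ v: a b / a + b}.
Proof. by move=> a b; apply: val_inj; rewrite /= scalerDl. Qed.

HB.instance Definition _ := GRing.Zmodule_isLmodule.Build R[i] KT kscaleA kscale1 kscaleDr kscaleDl.

Definition khip (x y : KT) := hip (val x) (val y).

Lemma khip_linl a (x y z : KT) : khip (a *: x + y) z = a * khip x z + khip y z.
Proof. exact: hip_linl. Qed.
Lemma khip_sym (x y : KT) : khip y x = (khip x y)^*%C.
Proof. exact: hip_sym. Qed.
Lemma khip_ge0 (x : KT) : 0 <= khip x x.
Proof. exact: hip_ge0. Qed.
Lemma khip_def (x : KT) : khip x x = 0 -> x = 0.
Proof. by move=> /hip_def h; apply: val_inj. Qed.
Lemma khip_complete (u : nat -> KT) :
  (forall e : R[i], 0 < e -> exists N : nat, forall m n : nat,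
      (N <= m)%N -> (N <= n)%N -> sqrtC (khip (u m - u n) (u m - u n)) < e) ->
  exists l : KT, forall e : R[i], 0 < e -> exists N : nat, forall n : nat,
      (N <= n)%N -> sqrtC (khip (u n - l) (u n - l)) < e.
Proof.
move=> Hc.
have [l Hl] := @hip_complete R H (fun n => val (u n)) Hc.
have Pl : P l by apply: (Pcl (u := fun n => val (u n))) => // n; exact: kP.
by exists (kmk Pl).
Qed.

Definition KH : hilbert R := Hilbert khip_linl khip_sym khip_ge0 khip_def khip_complete.

Lemma val_sum (I : Type) (l : seq I) (F : I -> KH) :
  val (\sum_(p <- l) F p) = \sum_(p <- l) val (F p).
Proof.
elim: l => [|p l IH]; first by rewrite !big_nil.
by rewrite !big_cons /= IH.
Qed.

End Sub.

Section SubRep.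
Variable R : realType.
Variable H : hilbert R.
Variable P : H -> Prop.
Hypotheses (P0 : P 0) (PL : forall a x y, P x -> P y -> P (a *: x + y))
  (Pcl : forall (u : nat -> H) l, (forall n, P (u n)) ->
     (forall e : R[i], 0 < e -> exists N, forall n, (N <= n)%N ->
        sqrtC (hip (u n - l) (u n - l)) < e) -> P l).
Variables (S' T' : 'I_2 -> H -> H).
Hypotheses (rep' : is_rep S' T') (PS : forall i x, P x -> P (S' i x))
  (PT : forall i x, P x -> P (T' i x)).

Local Notation K := (KH P0 PL Pcl).

Definition SK i (x : K) : K := kmk (PS i (kP x)).
Definition TK i (x : K) : K := kmk (PT i (kP x)).

Lemma rep_K : is_rep SK TK.
Proof.
split.
- move=> i x y; exact: (adjS rep').
- move=> i j x; apply: val_inj; rewrite /= (TS rep'); by case: ifP.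
- move=> x; apply: val_inj; exact: (SScover rep').
Qed.

Lemma val_sword w (x : K) : val (act_sword SK TK w x) = act_sword S' T' w (val x).
Proof. by elim: w => [|[i b] w IH] //=; case: b => /=; rewrite IH. Qed.

Lemma val_word w (x : K) : val (act_word SK w x) = act_word S' w (val x).
Proof. by elim: w => [|i w IH] //=; rewrite IH. Qed.

Lemma isP_sub J' (Om' : H) (hOm : P Om') :
  hip Om' Om' = 1 -> act_word S' J' Om' = Om' ->
  (forall m n, (m < size J')%N -> (n < size J')%N ->
     hip (act_word S' (drop m J') Om') (act_word S' (drop n J') Om') = (m == n)%:R) ->
  (forall x, P x -> forall r : R, 0 < r -> exists l : seq (R[i] * seq ('I_2 * bool)),
     rn (x - \sum_(p <- l) p.1 *: act_sword S' T' p.2 Om') < r) ->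
  isP J' SK TK.
Proof.
move=> H1 H2 H3 H4; split; first exact: rep_K.
exists (kmk hOm); split.
- exact: H1.
- move=> x e He; have [r [Hr ->]] := pos_real He.
  have [l Hl] := H4 _ (kP x) _ (exprn_gt0 2 Hr).
  exists l; rewrite /hnorm /= /khip /=.
  have E : sval (\sum_(p <- l) p.1 *: act_sword SK TK p.2 (kmk hOm)) =
            \sum_(p <- l) p.1 *: act_sword S' T' p.2 Om'.
    have := val_sum l (fun p => p.1 *: act_sword SK TK p.2 (kmk hOm)).
    move=> ->; apply: eq_bigr => p _; by rewrite /= val_sword.
  rewrite E.
  by rewrite hnorm_lt.
- by apply: val_inj; rewrite val_word.
- move=> m n Hm Hn; rewrite /= /khip !val_word; exact: H3.
Qed.

End SubRep.

Lemma ord2P (i : 'I_2) : i = ord0 \/ i = 1.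
Proof. by case: i => [[|[|n]] Hi]; [left; apply: val_inj|right; apply: val_inj|]. Qed.

Definition flip (j : 'I_2) : 'I_2 := if j == ord0 then 1 else ord0.

Lemma flip_eq0 j : (flip j == ord0) = ~~ (j == ord0).
Proof. by case: (ord2P j) => ->. Qed.

Lemma flip_neq j : (flip j == j) = false.
Proof. by case: (ord2P j) => ->. Qed.

Lemma n1_cons a I : odd (n1 (a :: I)) = (a == ord0) (+) odd (n1 I).
Proof. by rewrite /n1 big_cons oddD; case: (ord2P a) => ->. Qed.

Lemma n1_nil : n1 [::] = 0%N.
Proof. by rewrite /n1 big_nil. Qed.

Lemma n1_rcons I a : odd (n1 (rcons I a)) = odd (n1 I) (+) (a == ord0).
Proof.
rewrite -cats1 /n1 big_cat big_cons big_nil /= oddD.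
by case: (ord2P a) => ->.
Qed.

Section Comb.
Variables (R : realType) (H : hilbert R) (S T : 'I_2 -> H -> H) (J : seq 'I_2) (Om : H).
Hypotheses (rep : is_rep S T) (kpos : (0 < size J)%N) (HOm : act_word S J Om = Om)
  (HON : forall m n, (m < size J)%N -> (n < size J)%N ->
     hip (act_word S (drop m J) Om) (act_word S (drop n J) Om) = (m == n)%:R).
Hypothesis Hcyc : cyclic_vec S T Om.

Local Notation k := (size J).

Let TS i j x : T i (S j x) = if i == j then x else 0 := TS rep i j x.
Let S0 i : S i 0 = 0 := S0 rep i.
Let T0 i : T i 0 = 0 := T0 rep i.
Let SD i x y : S i (x + y) = S i x + S i y := SD rep i x y.
Let TD i x y : T i (x + y) = T i x + T i y := TD rep i x y.
Let adjS i x y : hip (S i x) y = hip x (T i y) := adjS rep i x y.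
Let adjT i x y : hip (T i x) y = hip x (S i y) := adjT rep i x y.
Let SScover x : S ord0 (T ord0 x) + S 1 (T 1 x) = x := SScover rep x.

Definition jj m := nth ord0 J (m %% k).
Definition e m := act_word S (drop (m %% k) J) Om.
Definition bvec I m := act_word S I (e m).
Definition W x := S 1 (T ord0 x) + S ord0 (T 1 x).
Definition Wp (b : bool) x := if b then W x else x.
Fixpoint Q n := if n is n'.+1 then Q n' (+) (jj n' == ord0) else false.
Definition cls I m := odd (n1 I) (+) Q m.
Definition tS := psi12S S T.
Definition tT := psi12T S T.
Definition Omc (c : bool) := Wp c Om.
Definition RT c v := exists w, v = act_sword tS tT w (Omc c).
Definition Bc c v := v = 0 \/ exists I m, v = bvec I m /\ cls I m = c.

Lemma WS a y : W (S a y) = S (flip a) y.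
Proof.
rewrite /W !TS; case: (ord2P a) => -> /=; by rewrite ?S0 ?addr0 ?add0r.
Qed.

Lemma WW x : W (W x) = x.
Proof.
rewrite /W !TD !TS /= ?T0 ?S0 !addr0 !add0r addrC; exact: SScover.
Qed.

Lemma W0 : W 0 = 0.
Proof. by rewrite /W !T0 !S0 addr0. Qed.

Lemma W_adj x y : hip (W x) y = hip x (W y).
Proof.
by rewrite /W hipDl hipDr !adjS !adjT addrC.
Qed.

Lemma WpS b a y : Wp b (S a y) = S (if b then flip a else a) y.
Proof. by case: b => //=; rewrite WS. Qed.

Lemma tS0 x : tS ord0 x = S ord0 (W x).
Proof. by rewrite /tS /psi12S eqxx /W SD. Qed.
Lemma tS1 x : tS 1 x = S 1 x.
Proof. by []. Qed.
Lemma tT0 x : tT ord0 x = W (T ord0 x).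
Proof. by rewrite /tT /psi12T eqxx /W addrC. Qed.
Lemma tT1 x : tT 1 x = T 1 x.
Proof. by []. Qed.

Lemma rep_t : is_rep tS tT.
Proof.
split.
- move=> i x y; case: (ord2P i) => ->.
  + by rewrite tS0 tT0 adjS W_adj.
  + by rewrite tS1 tT1 adjS.
- move=> i j x; case: (ord2P i) => ->; case: (ord2P j) => ->.
  + by rewrite tS0 tT0 TS WW.
  + by rewrite tS1 tT0 TS W0.
  + by rewrite tS0 tT1 TS.
  + by rewrite tS1 tT1 TS.
- move=> x; rewrite tS0 tT0 WW tS1 tT1; exact: SScover.
Qed.

Lemma e0 : e 0 = Om.
Proof. by rewrite /e mod0n drop0. Qed.

Lemma e_mod m : e (m %% k)%N = e m.
Proof. by rewrite /e modn_mod. Qed.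

Lemma jj_mod m : jj (m %% k)%N = jj m.
Proof. by rewrite /jj modn_mod. Qed.

Lemma modS_k m : (m.+1 %% k = (m %% k).+1 %% k)%N.
Proof. by rewrite -addn1 -modnDml addn1. Qed.

Lemma e_step m : e m = S (jj m) (e m.+1).
Proof.
rewrite /e /jj (drop_nth ord0) ?ltn_pmod //= modS_k.
have := ltn_pmod m kpos; rewrite leq_eqVlt => /orP [/eqP Ek | Hlt].
  by rewrite Ek modnn drop_size drop0 HOm.
by rewrite (modn_small Hlt).
Qed.

Lemma e_orth m n : hip (e m) (e n) = ((m %% k) == (n %% k))%N%:R.
Proof. by rewrite /e HON ?ltn_pmod. Qed.

Lemma Q_take l : (l <= k)%N -> Q l = odd (n1 (take l J)).
Proof.
elim: l => [|l IH] Hl; first by rewrite take0 n1_nil.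
rewrite /= IH ?(ltnW Hl) // (take_nth ord0 Hl) n1_rcons /jj modn_small //.
Qed.

Lemma Q_k : Q k = odd (n1 J).
Proof. by rewrite Q_take // take_size. Qed.

Lemma Q_addk n : Q (n + k) = Q n (+) odd (n1 J).
Proof.
elim: n => [|n IH]; first by rewrite add0n Q_k.
rewrite addSn /= IH -addbA (addbC (odd _)) addbA.
by rewrite /jj modnDr.
Qed.

Lemma cls_nil m : cls [::] m = Q m.
Proof. by rewrite /cls n1_nil. Qed.

Lemma cls_cons a I m : cls (a :: I) m = (a == ord0) (+) cls I m.
Proof. by rewrite /cls n1_cons addbA. Qed.

Lemma bvec0 m : bvec [::] m = bvec [:: jj m] m.+1.
Proof. by rewrite /bvec /= -e_step. Qed.

Lemma cls0 m : cls [::] m = cls [:: jj m] m.+1.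
Proof.
rewrite cls_cons !cls_nil /=.
by case: (Q m); case: (jj m == ord0).
Qed.

Lemma Bc_eq c c' v : c = c' -> Bc c v -> Bc c' v.
Proof. by move=> ->. Qed.

Lemma Bc_S c a v : Bc c v -> Bc ((a == ord0) (+) c) (S a v).
Proof.
case=> [->|[I [m [-> Hc]]]]; first by left; rewrite S0.
right; exists (a :: I), m; split => //.
by rewrite cls_cons Hc.
Qed.

Lemma Bc_nonnil c v : Bc c v ->
  v = 0 \/ exists a I m, v = bvec (a :: I) m /\ cls (a :: I) m = c.
Proof.
case=> [->|[[|a I] [m [-> Hc]]]]; first by left.
- right; exists (jj m), [::], m.+1; by rewrite bvec0 -cls0.
- by right; exists a, I, m.
Qed.

Lemma Bc_T c a v : Bc c v -> Bc ((a == ord0) (+) c) (T a v).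
Proof.
move/Bc_nonnil=> [->|[b [I [m [-> Hc]]]]]; first by left; rewrite T0.
rewrite /bvec /= TS.
case: ifP => [/eqP Eb|_]; last by left.
subst b; right; exists I, m; split => //.
by rewrite -Hc cls_cons addbA addbb.
Qed.

Lemma Bc_W c v : Bc c v -> Bc (~~ c) (W v).
Proof.
move/Bc_nonnil=> [->|[b [I [m [-> Hc]]]]]; first by left; rewrite W0.
rewrite /bvec /= WS.
right; exists (flip b :: I), m; split => //.
by rewrite -Hc !cls_cons flip_eq0 addNb.
Qed.

Lemma Bc_tS c i v : Bc c v -> Bc c (tS i v).
Proof.
move=> Hv; case: (ord2P i) => ->.
- rewrite tS0; apply: Bc_eq (Bc_S ord0 (Bc_W Hv)).
  by rewrite eqxx addTb negbK.
- by rewrite tS1; apply: Bc_eq (Bc_S 1 Hv).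
Qed.

Lemma Bc_tT c i v : Bc c v -> Bc c (tT i v).
Proof.
move=> Hv; case: (ord2P i) => ->.
- rewrite tT0; apply: Bc_eq (Bc_W (Bc_T ord0 Hv)).
  by rewrite eqxx addTb negbK.
- by rewrite tT1; apply: Bc_eq (Bc_T 1 Hv).
Qed.

Lemma Bc_Omc c : Bc c (Omc c).
Proof.
have H0 : Bc false Om.
  by right; exists [::], 0%N; rewrite /bvec /= e0 cls_nil.
by case: c => //; apply: (Bc_W H0).
Qed.

Lemma Bc_RT c v : RT c v -> Bc c v.
Proof.
case=> w ->; elim: w => [|[i b] w IH] /=; first exact: Bc_Omc.
by case: b; [apply: Bc_tT | apply: Bc_tS].
Qed.

Lemma Bc_sword w : exists c, Bc c (act_sword S T w Om).
Proof.
elim: w => [|[i b] w [c IH]] /=.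
  by exists false; right; exists [::], 0%N; rewrite /bvec /= e0 cls_nil.
by case: b; eexists; [apply: Bc_T IH | apply: Bc_S IH].
Qed.

Lemma RT_eq c v v' : v = v' -> RT c v -> RT c v'.
Proof. by move=> ->. Qed.

Lemma RT_tS c i v : RT c v -> RT c (tS i v).
Proof. by case=> w ->; exists ((i, false) :: w). Qed.

Lemma RT_tT c i v : RT c v -> RT c (tT i v).
Proof. by case=> w ->; exists ((i, true) :: w). Qed.

Definition lt c n := if c (+) Q n then flip (jj n) else jj n.

Lemma Wp_e c n : Wp (c (+) Q n) (e n) = S (lt c n) (e n.+1).
Proof. by rewrite {1}e_step WpS. Qed.

Lemma cQS c n : c (+) Q n.+1 = (lt c n == ord0).
Proof.
rewrite /= /lt addbA; case: (c (+) Q n) => //.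
by rewrite flip_eq0.
Qed.

Lemma RT_cycle c n : RT c (Wp (c (+) Q n) (e n)).
Proof.
elim: n => [|n IH].
  by exists [::]; rewrite /= addbF e0.
rewrite Wp_e in IH.
rewrite cQS.
case: (ord2P (lt c n)) => Hl; rewrite Hl in IH *.
- apply: RT_eq (RT_tT ord0 IH); by rewrite tT0 TS.
- apply: RT_eq (RT_tT 1 IH); by rewrite tT1 TS.
Qed.

Lemma RT_all I m f : RT (cls I m (+) f) (Wp f (bvec I m)).
Proof.
elim: I f => [|a I IH] f.
  have := RT_cycle (Q m (+) f) m.
  by rewrite cls_nil addbAC addbb addFb.
rewrite /bvec /= WpS -/(bvec I m).
have Ha' : ((if f then flip a else a) == ord0) = f (+) (a == ord0).
  by case: f => //=; rewrite flip_eq0.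
case: (ord2P (if f then flip a else a)) => Hl; rewrite Hl in Ha' *.
- have := RT_tS ord0 (IH true); rewrite tS0 /= WW.
  have -> // : cls (a :: I) m (+) f = cls I m (+) true.
  by clear Hl; rewrite cls_cons; move: Ha'; rewrite eqxx; case: f; case: (a == ord0); case: (cls I m).
- have := RT_tS 1 (IH false); rewrite tS1 /=.
  have -> // : cls (a :: I) m (+) f = cls I m (+) false.
  by clear Hl; rewrite cls_cons; move: Ha' => /=; case: f; case: (a == ord0); case: (cls I m).
Qed.

Lemma RT_of_Bc c v : Bc c v -> v = 0 \/ RT c v.
Proof.
case=> [->|[I [m [-> Hc]]]]; first by left.
by right; have := RT_all I m false; rewrite addbF Hc.
Qed.

Lemma RT_odd v : odd (n1 J) -> RT true v -> RT false v.
Proof.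
move=> Hodd [w ->].
have [w0 Hw0] := RT_cycle false k.
rewrite /= Q_k Hodd /= /e modnn drop0 HOm in Hw0.
exists (w ++ w0); by rewrite /Omc /= Hw0 /act_sword foldr_cat.
Qed.

Lemma Q_mod (heven : ~~ odd (n1 J)) m : Q m = Q (m %% k)%N.
Proof.
rewrite {1}(divn_eq m k) addnC.
elim: (m %/ k)%N => [|q IH]; first by rewrite mul0n addn0.
by rewrite mulSnr addnA Q_addk (negbTE heven) addbF.
Qed.

Lemma orth_gen (heven : ~~ odd (n1 J)) n I I' m m' :
  (size I + size I' <= n)%N -> cls I m != cls I' m' ->
  hip (bvec I m) (bvec I' m') = 0.
Proof.
elim: n I I' m m' => [|n IH] [|a I] [|b I'] m m' //= Hs Hc.
- rewrite /bvec /= e_orth; case: eqP => // Em.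
  by move: Hc; rewrite !cls_nil Q_mod // Em -Q_mod // eqxx.
- rewrite /bvec /= e_orth; case: eqP => // Em.
  by move: Hc; rewrite !cls_nil Q_mod // Em -Q_mod // eqxx.
- rewrite /bvec /= e_step adjS TS; case: ifP => [/eqP Eb|]; last by rewrite hip0r.
  apply: (IH [::] I' m.+1 m'); first by move: Hs; rewrite !add0n ltnS.
  move: Hc; rewrite !cls_nil cls_cons -Eb /=.
  by case: (Q m); case: (jj m == ord0); case: (cls I' m').
- rewrite /bvec /= [e m']e_step adjS TS; case: ifP => [/eqP Eb|]; last by rewrite hip0r.
  apply: (IH I [::] m m'.+1); first by move: Hs; rewrite !addn0 ltnS.
  move: Hc; rewrite !cls_nil cls_cons Eb /=.
  by case: (Q m'); case: (jj m' == ord0); case: (cls I m).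
- rewrite /bvec /= adjS TS; case: ifP => [/eqP Eb|]; last by rewrite hip0r.
  apply: (IH I I' m m'); first by move: Hs; rewrite addSn addnS !ltnS => /ltnW.
  move: Hc; rewrite !cls_cons Eb.
  by case: (b == ord0); case: (cls I m); case: (cls I' m').
Qed.

Lemma orth_Bc (heven : ~~ odd (n1 J)) c u v : Bc c u -> Bc (~~ c) v -> hip u v = 0.
Proof.
case=> [->|[I [m [-> Hc]]]]; first by rewrite hip0l.
case=> [->|[I' [m' [-> Hc']]]]; first by rewrite hip0r.
apply: (orth_gen heven (leqnn _)); rewrite Hc Hc'; by case: (c).
Qed.

Lemma orth_RT (heven : ~~ odd (n1 J)) c u v : RT c u -> RT (~~ c) v -> hip u v = 0.
Proof. by move=> /Bc_RT Hu /Bc_RT Hv; exact: orth_Bc Hu Hv. Qed.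

Definition vc c n := Wp (c (+) Q n) (e n).

Lemma tS_lt c n : tS (lt c n) (vc c n.+1) = vc c n.
Proof.
rewrite /vc cQS [RHS]Wp_e; case: (ord2P (lt c n)) => ->.
- by rewrite tS0 /= WW.
- by rewrite tS1.
Qed.

Definition Jc c L := mkseq (lt c) L.

Lemma act_drop c L n : (n <= L)%N ->
  act_word tS (drop n (Jc c L)) (vc c L) = vc c n.
Proof.
move=> Hn; rewrite -(subKn Hn).
elim: (L - n)%N (leq_subr n L) => [|d IH] Hd.
  by rewrite subn0 drop_oversize ?size_mkseq.
have Hlt : (L - d.+1 < L)%N by lia.
rewrite (drop_nth ord0) ?size_mkseq // nth_mkseq //=.
rewrite (subnSK Hd) IH ?(ltnW Hd) //.
by rewrite -(subnSK Hd) tS_lt.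
Qed.

Lemma modS_eq m n : (m.+1 %% k == n.+1 %% k)%N = (m %% k == n %% k)%N.
Proof. by rewrite -(addn1 m) -(addn1 n) eqn_modDr. Qed.

Lemma vc_orth c m n :
  hip (vc c m) (vc c n) = ((lt c m == lt c n) && (m %% k == n %% k)%N)%:R.
Proof.
rewrite /vc !Wp_e adjS TS; case: ifP => _ /=; first by rewrite e_orth modS_eq.
by rewrite hip0r.
Qed.

Lemma vc0 c : vc c 0 = Omc c.
Proof. by rewrite /vc /= addbF e0. Qed.

Lemma vc_k c : ~~ odd (n1 J) -> vc c k = Omc c.
Proof. by move=> He; rewrite /vc Q_k (negbTE He) addbF /e modnn drop0 HOm. Qed.

Lemma vc_2k : odd (n1 J) -> vc false (k + k) = Om.
Proof.
move=> Ho; rewrite /vc Q_addk Q_k Ho /= /e modnDl modnn drop0 HOm //.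
Qed.

Lemma act_Jc_even c : ~~ odd (n1 J) -> act_word tS (Jc c k) (Omc c) = Omc c.
Proof. by move=> He; have := act_drop c (leq0n k); rewrite drop0 vc_k // vc0. Qed.

Lemma act_Jc_odd : odd (n1 J) -> act_word tS (Jc false (k + k)) Om = Om.
Proof.
by move=> Ho; have := act_drop false (leq0n (k + k)); rewrite drop0 vc_2k // vc0.
Qed.

Lemma Jc_orth_even c m n : ~~ odd (n1 J) -> (m < k)%N -> (n < k)%N ->
  hip (act_word tS (drop m (Jc c k)) (Omc c)) (act_word tS (drop n (Jc c k)) (Omc c))
  = (m == n)%:R.
Proof.
move=> He Hm Hn.
have E := act_drop c (ltnW Hm); have E' := act_drop c (ltnW Hn).
rewrite (vc_k c He) in E E'; rewrite E E' vc_orth.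
rewrite !modn_small //; case: (eqVneq m n) => [->|Hne]; first by rewrite !eqxx.
by rewrite andbF.
Qed.

Lemma mod_twice m n : (m < k + k)%N -> (n < k + k)%N -> (m %% k = n %% k)%N ->
  m <> n -> (n = m + k)%N \/ (m = n + k)%N.
Proof.
move=> Hm Hn Emn Hne.
have Hr : forall x, (x < k + k)%N -> (x < k)%N \/ ((k <= x)%N /\ x %% k = x - k)%N.
  move=> x Hx; case: (ltnP x k) => Hxk; first by left.
  right; split => //.
  rewrite -{1}(subnK Hxk) modnDr modn_small //; lia.
case: (Hr m Hm) => [Hmk|[Hmk Em]]; case: (Hr n Hn) => [Hnk|[Hnk En]].
- by move: Emn; rewrite !modn_small.
- left; move: Emn; rewrite En modn_small //; lia.
- right; move: Emn; rewrite Em (modn_small Hnk); lia.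
- by move: Emn; rewrite Em En; lia.
Qed.

Lemma Jc_orth_odd m n : odd (n1 J) -> (m < k + k)%N -> (n < k + k)%N ->
  hip (act_word tS (drop m (Jc false (k + k))) Om)
      (act_word tS (drop n (Jc false (k + k))) Om) = (m == n)%:R.
Proof.
move=> Ho Hm Hn.
have E := act_drop false (ltnW Hm); have E' := act_drop false (ltnW Hn).
rewrite (vc_2k Ho) in E E'; rewrite E E' vc_orth.
case: (eqVneq m n) => [->|Hne]; first by rewrite !eqxx.
case: (eqVneq (m %% k)%N (n %% k)%N) => [Emn|]; last by rewrite andbF.
have key : forall a b, (b = a + k)%N -> (lt false a == lt false b) = false.
  move=> a b ->; rewrite /lt Q_addk Ho addbT /jj modnDr.
  by case: (Q a) => /=; rewrite ?flip_neq // eq_sym flip_neq.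
case: (mod_twice Hm Hn Emn (elimN eqP Hne)) => Eq.
- by rewrite (key m n Eq).
- by rewrite eq_sym (key n m Eq).
Qed.

Definition sumS (l : seq (R[i] * seq ('I_2 * bool))) : H :=
  \sum_(p <- l) p.1 *: act_sword S T p.2 Om.
Definition sumT c (l : seq (R[i] * seq ('I_2 * bool))) : H :=
  \sum_(p <- l) p.1 *: act_sword tS tT p.2 (Omc c).

Lemma span_split l : exists l0 l1, sumS l = sumT false l0 + sumT true l1.
Proof.
elim: l => [|[a w] l [l0 [l1 IH]]].
  by exists [::], [::]; rewrite /sumS /sumT !big_nil addr0.
have [c Hc] := Bc_sword w.
case: (RT_of_Bc Hc) => [Hz|[w' Hw']].
  exists l0, l1; by rewrite /sumS big_cons -/(sumS l) /= Hz scaler0 add0r.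
case: c Hc Hw' => _ Hw'.
- exists l0, ((a, w') :: l1); rewrite /sumS big_cons -/(sumS l) IH /= Hw'.
  by rewrite /sumT big_cons /= addrCA.
- exists ((a, w') :: l0), l1; rewrite /sumS big_cons -/(sumS l) IH /= Hw'.
  by rewrite /sumT big_cons /= addrA.
Qed.

Lemma span_odd l : odd (n1 J) -> exists l', sumS l = sumT false l'.
Proof.
move=> Ho; elim: l => [|[a w] l [l' IH]].
  by exists [::]; rewrite /sumS /sumT !big_nil.
have [c Hc] := Bc_sword w.
case: (RT_of_Bc Hc) => [Hz|HR].
  exists l'; by rewrite /sumS big_cons -/(sumS l) /= Hz scaler0 add0r.
have [w' Hw'] : RT false (act_sword S T w Om) by case: c Hc HR => _ // /RT_odd; apply.
exists ((a, w') :: l'); rewrite /sumS big_cons -/(sumS l) IH /= Hw'.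
by rewrite /sumT big_cons.
Qed.

Lemma sumT_hipr c x l : (forall v, RT c v -> hip x v = 0) -> hip x (sumT c l) = 0.
Proof.
move=> Hx; rewrite /sumT hip_sumr big1 // => p _.
by rewrite hipZr Hx ?mulr0 //; exists p.2.
Qed.

Lemma sumT_hipl c x l : (forall v, RT c v -> hip x v = 0) -> hip (sumT c l) x = 0.
Proof. by move=> Hx; apply: hip_conj0; apply: sumT_hipr. Qed.

Lemma sumT_orth (heven : ~~ odd (n1 J)) c l l' : hip (sumT c l) (sumT (~~ c) l') = 0.
Proof.
apply: sumT_hipr => v Hv; apply: sumT_hipl => u Hu.
apply: hip_conj0; exact: (orth_RT heven Hu Hv).
Qed.

Lemma sumT_sub c l l' : sumT c l - sumT c l' = sumT c (l ++ map (fun p => (- p.1, p.2)) l').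
Proof.
rewrite /sumT big_cat big_map /=; congr (_ + _).
rewrite -sumrN; apply: eq_bigr => p _; by rewrite scaleNr.
Qed.

Lemma Om_norm : hip Om Om = 1.
Proof. by have := HON kpos kpos; rewrite drop0 HOm eqxx. Qed.

Lemma dense_S z (r : R) : 0 < r -> exists l, rn (z - sumS l) < r.
Proof.
move=> Hr; have Hs : 0 < Num.sqrt r by rewrite sqrtr_gt0.
have [l Hl] := Hcyc z (etrans (ltc0R _) Hs).
exists l; move: Hl; rewrite /hnorm hnorm_lt // sqr_sqrtr // ltW //.
Qed.

Lemma main_odd : odd (n1 J) ->
  exists (J3 : seq 'I_2) (H3 : hilbert R) (S3 T3 : 'I_2 -> H3 -> H3),
    [/\ (0 < size J3)%N, isP J3 S3 T3 & unit_equiv tS S3].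
Proof.
move=> Ho; exists (Jc false (k + k)), H, tS, tT; split.
- by rewrite size_mkseq addn_gt0 kpos.
- split; first exact: rep_t.
  exists Om; split.
  + exact: Om_norm.
  + move=> x e He; have [r [Hr ->]] := pos_real He.
    have [l Hl] := dense_S x (exprn_gt0 2 Hr).
    have [l' Hl'] := span_odd l Ho.
    exists l'; rewrite /hnorm hnorm_lt //.
    by move: Hl; rewrite Hl'.
  + exact: act_Jc_odd.
  + by move=> m n; rewrite size_mkseq => Hm Hn; apply: Jc_orth_odd.
- exists (fun x => x); split => // z; by exists z.
Qed.

Definition Spc c v := exists l, v = sumT c l.

Section Even.
Hypothesis heven : ~~ odd (n1 J).

Lemma Ev_hSG c a v : Spc c a -> RT (~~ c) v -> hip a v = 0.
Proof.
case=> l -> Hv; apply: sumT_hipl => u Hu; apply: hip_conj0. exact: (@orth_RT heven c u v Hu Hv).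
Qed.

Lemma Ev_hSS c a b : Spc c a -> Spc (~~ c) b -> hip a b = 0.
Proof. by case=> l -> [l' ->]; apply: sumT_orth. Qed.

Lemma Ev_hPS c x b : Pc RT c x -> Spc (~~ c) b -> hip x b = 0.
Proof. by move=> Hx [l ->]; apply: sumT_hipr. Qed.

Lemma Ev_hSub c x y : Spc c x -> Spc c y -> Spc c (x - y).
Proof. by case=> l -> [l' ->]; exists (l ++ map (fun p => (- p.1, p.2)) l'); apply: sumT_sub. Qed.

Lemma Ev_hDense z (r : R) : 0 < r ->
  exists a b, [/\ Spc false a, Spc true b & rn (z - (a + b)) < r].
Proof.
move=> Hr; have [l Hl] := dense_S z Hr.
have [l0 [l1 E]] := span_split l.
exists (sumT false l0), (sumT true l1); split => //; [by exists l0 | by exists l1 | by rewrite -E].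
Qed.

Lemma Ev_P0 c : Pc RT c 0.
Proof. by move=> v _; rewrite hip0l. Qed.

Lemma Ev_PL c a x y : Pc RT c x -> Pc RT c y -> Pc RT c (a *: x + y).
Proof. by move=> Hx Hy v Hv; rewrite hip_linl Hx // Hy // mulr0 addr0. Qed.

Lemma Ev_Pcl c (u : nat -> H) l : (forall n, Pc RT c (u n)) ->
     (forall e : R[i], 0 < e -> exists N, forall n, (N <= n)%N ->
        sqrtC (hip (u n - l) (u n - l)) < e) -> Pc RT c l.
Proof. exact: limit_closed. Qed.

Lemma Ev_PS c i x : Pc RT c x -> Pc RT c (tS i x).
Proof. by move=> Hx v Hv; rewrite (Top_adjS rep_t) Hx //; apply: RT_tT. Qed.

Lemma Ev_PT c i x : Pc RT c x -> Pc RT c (tT i x).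
Proof. by move=> Hx v Hv; rewrite (Top_adjT rep_t) Hx //; apply: RT_tS. Qed.

Lemma Ev_POm c : Pc RT c (Omc c).
Proof. move=> v Hv; apply: (@orth_RT heven c (Omc c) v _ Hv); by exists [::]. Qed.

Definition Kc c := KH (@Ev_P0 c) (@Ev_PL c) (@Ev_Pcl c).
Definition SKc c := SK (P0 := @Ev_P0 c) (PL := @Ev_PL c) (Pcl := @Ev_Pcl c) (@Ev_PS c).
Definition TKc c := TK (P0 := @Ev_P0 c) (PL := @Ev_PL c) (Pcl := @Ev_Pcl c) (@Ev_PT c).
Arguments SKc c : clear implicits.
Arguments TKc c : clear implicits.

Lemma isP_Kc c : isP (Jc c k) (SKc c) (TKc c).
Proof.
apply: (isP_sub (@Ev_P0 c) (@Ev_PL c) (@Ev_Pcl c) rep_t (@Ev_PS c) (@Ev_PT c) (@Ev_POm c)).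
- by have := Jc_orth_even c heven kpos kpos; rewrite drop0 act_Jc_even.
- exact: act_Jc_even.
- by move=> m n; rewrite size_mkseq; apply: Jc_orth_even.
- move=> x Hx r Hr.
  have [a [[l ->] Ha]] := approx Ev_hSS Ev_hPS Ev_hDense Hx Hr.
  by exists l.
Qed.

Lemma ues : unit_equiv_sum tS (SKc false) (SKc true).
Proof.
exists (fun x : Kc false => val x), (fun x : Kc true => val x); split; [split|split].
- by [].
- by [].
- by [].
- by [].
- move=> x y; exact: (orth01 Ev_hSS Ev_hPS Ev_hDense (kP x) (kP y)).
- move=> z; have [x [y [Hx Hy Exy]]] := decomp Ev_hSG Ev_hSS Ev_hSub Ev_hDense z.
  by exists (kmk (P := Pc RT false) Hx), (kmk (P := Pc RT true) Hy).
- by [].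
- by [].
Qed.

End Even.

Lemma main_even : ~~ odd (n1 J) ->
  exists (J1 J2 : seq 'I_2) (H1 H2 : hilbert R)
         (S1 T1 : 'I_2 -> H1 -> H1) (S2 T2 : 'I_2 -> H2 -> H2),
    [/\ (0 < size J1)%N, (0 < size J2)%N, isP J1 S1 T1, isP J2 S2 T2 &
        unit_equiv_sum tS S1 S2].
Proof.
move=> He.
exists (Jc false k), (Jc true k), (Kc false), (Kc true),
  (@SKc false), (@TKc false), (@SKc true), (@TKc true).
split; rewrite ?size_mkseq //; [exact: (isP_Kc He) | exact: (isP_Kc He) | exact: (ues He)].
Qed.

End Comb.

Theorem proposition4p1 (R : realType) (J : seq 'I_2) (H : hilbert R)
    (S T : 'I_2 -> H -> H) :
  (0 < size J)%N -> isP J S T ->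
  (~~ odd (n1 J) ->
     exists (J1 J2 : seq 'I_2) (H1 H2 : hilbert R)
            (S1 T1 : 'I_2 -> H1 -> H1) (S2 T2 : 'I_2 -> H2 -> H2),
       [/\ (0 < size J1)%N, (0 < size J2)%N, isP J1 S1 T1, isP J2 S2 T2 &
           unit_equiv_sum (psi12S S T) S1 S2]) /\
  (odd (n1 J) ->
     exists (J3 : seq 'I_2) (H3 : hilbert R) (S3 T3 : 'I_2 -> H3 -> H3),
       [/\ (0 < size J3)%N, isP J3 S3 T3 & unit_equiv (psi12S S T) S3]).
Proof.
move=> kpos [rep [Om [Hn Hcyc HOm HON]]]; split.
- exact: (main_even rep kpos HOm HON Hcyc).
- exact: (main_odd rep kpos HOm HON Hcyc).
Qed.
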